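(* Let $(G,c,r)$ be an instance of the metric Many-Visits TSP and let $\alpha\geq1$. Let $T_1$ be a Hamiltonian cycle in $G$ (a single-visit TSP tour) with $c(T_1)\leq\alpha\cdot c(\mathrm{OPT}_1)$, where $\mathrm{OPT}_1$ is an optimal single-visit tour, and let $P\in\mathbb{Z}_{\geq0}^E$ be an optimal solution of the transportation problem with prescriptions $r-1$, i.e. a minimum-cost $P$ with $d_P(v)=2(r(v)-1)$ for all $v\in V$. Then the multigraph $T=T_1+P$ is a feasible solution of the Many-Visits TSP instance $(G,c,r)$, and $c(T)\leq(\alpha+1)\cdot c(\mathrm{OPT}_r)$, where $\mathrm{OPT}_r$ is an optimal Many-Visits TSP solution for $(G,c,r)$.
   Context: $G=(V,E)$ is the complete undirected graph on $n$ vertices with a self-loop at each vertex; $d_x(v)$ is the sum of $x$-values of edges incident to $v$, the self-loop counted twice. Costs $c:E\to\mathbb{R}_{\geq0}$ satisfy the triangle inequality, including $c(vv)\leq 2c(uv)$ for all $u,v$. A feasible Many-Visits TSP solution for requests $r:V\to\mathbb{Z}_{\geq1}$ is $z\in\mathbb{Z}_{\geq0}^E$ with $d_z(v)=2r(v)$ for all $v$ and $(V,\mathrm{supp}(z))$ connected; its cost is $\sum_e c(e)z(e)$. The transportation problem with prescriptions $q:V\to\mathbb{Z}_{\geq0}$ asks for a minimum-cost $z\in\mathbb{Z}_{\geq0}^E$ with $d_z(v)=2q(v)$ for all $v$ (no connectivity). For multigraphs $H_1,H_2$ on $V$, $H_1+H_2$ is the union of their edge multisets. *)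

(* Defs.v *)
From HB Require Import structures.
From mathcomp Require Import all_boot all_order all_algebra.
Set Implicit Arguments. Unset Strict Implicit. Unset Printing Implicit Defensive.
Import Order.TTheory GRing.Theory Num.Theory.

(* Vertices: 'I_n.  Edges of the complete graph with a self-loop at every
   vertex: unordered pairs {u,v} (u = v allowed), represented as ordered
   pairs (u,v) with u <= v. *)
Definition edge (n : nat) := {e : 'I_n * 'I_n | e.1 <= e.2}.

Lemma swap_le n (u v : 'I_n) : ~~ (u <= v) -> (v <= u)%N.
Proof. by rewrite -ltnNge; apply: ltnW. Qed.

Definition mk_edge n (u v : 'I_n) : edge n :=
  match boolP (u <= v) with
  | AltTrue h => exist _ (u, v) h
  | AltFalse h => exist (fun e : 'I_n * 'I_n => is_true (e.1 <= e.2)) (v, u) (swap_le h)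
  end.

(* d_x(v): self-loop counted twice *)
Definition deg n (x : edge n -> nat) (v : 'I_n) : nat :=
  \sum_(e : edge n) x e * ((((val e).1 == v) : nat) + (((val e).2 == v) : nat)).

Definition cost (R : numDomainType) n (c : edge n -> R) (x : edge n -> nat) : R :=
  (\sum_(e : edge n) (x e)%:R * c e)%R.

Definition msum n (x y : edge n -> nat) : edge n -> nat := fun e => x e + y e.

Definition supp_adj n (x : edge n -> nat) : rel 'I_n :=
  fun u v => 0 < x (mk_edge u v).
Definition connected_supp n (x : edge n -> nat) : Prop :=
  forall u v : 'I_n, connect (supp_adj x) u v.

Definition mvtsp_feasible n (r : 'I_n -> nat) (z : edge n -> nat) : Prop :=
  (forall v, deg z v = 2 * r v) /\ connected_supp z.

Definition transp_feasible n (q : 'I_n -> nat) (z : edge n -> nat) : Prop :=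
  forall v, deg z v = 2 * q v.

(* Hamiltonian cycle (single-visit tour): the edge multiset of the closed
   walk visiting the vertices in the cyclic order s, where s enumerates
   every vertex exactly once. *)
Definition tour_edges n (s : seq 'I_n) : seq (edge n) :=
  [seq mk_edge p.1 p.2 | p <- zip s (rot 1 s)].
Definition ham_cycle n (z : edge n -> nat) : Prop :=
  exists s : seq 'I_n, perm_eq s (enum 'I_n) /\
    forall e, z e = count_mem e (tour_edges s).

Definition metric_cost (R : numDomainType) n (c : edge n -> R) : Prop :=
  (forall e, 0 <= c e)%R /\
  (forall u v w : 'I_n, c (mk_edge u v) <= c (mk_edge u w) + c (mk_edge w v))%R.

(* Main.v *)
Require Import Defs.
From HB Require Import structures.
From mathcomp Require Import all_boot all_order all_algebra.
From mathcomp Require Import zify.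
Import Order.TTheory GRing.Theory Num.Theory.
Set Implicit Arguments. Unset Strict Implicit. Unset Printing Implicit Defensive.

Section E.
Variable n : nat.
Implicit Types (u v w a b : 'I_n) (e : edge n).

Lemma mk_edge_val u v : val (mk_edge u v) = if (u <= v)%N then (u, v) else (v, u).
Proof. rewrite /mk_edge; by destruct (boolP (u <= v)%N). Qed.

Lemma mk_edgeC u v : mk_edge u v = mk_edge v u.
Proof.
apply: val_inj; rewrite !mk_edge_val.
case: (leqP u v) => h1; case: (leqP v u) => h2 //.
by have -> : u = v by apply: val_inj; apply/eqP; rewrite eqn_leq h1 h2.
by move: (ltn_trans h1 h2); rewrite ltnn.
Qed.

Lemma mk_edge_eta e : e = mk_edge (val e).1 (val e).2.
Proof. by apply: val_inj; rewrite mk_edge_val (valP e); case: (val e). Qed.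

Definition mv e v : nat := (((val e).1 == v) : nat) + (((val e).2 == v) : nat).

Lemma mv_mk a b v : mv (mk_edge a b) v = ((a == v) : nat) + ((b == v) : nat).
Proof. by rewrite /mv mk_edge_val; case: ifP => _ //=; rewrite addnC. Qed.

Definition ind e : edge n -> nat := fun f => ((e == f) : nat).

Lemma deg_ext (x y : edge n -> nat) : x =1 y -> deg x =1 deg y.
Proof. by move=> h v; apply: eq_bigr => e _; rewrite h. Qed.

Lemma deg_msum (x y : edge n -> nat) v : deg (msum x y) v = deg x v + deg y v.
Proof. by rewrite /deg -big_split; apply: eq_bigr => e _; rewrite /msum mulnDl. Qed.

Lemma deg_ind e v : deg (ind e) v = mv e v.
Proof.
rewrite /deg (bigD1 e) //= big1 ?addn0 /ind ?eqxx ?mul1n //.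
by move=> f; rewrite eq_sym => /negbTE ->.
Qed.

Lemma sum_count_nat (F : edge n -> nat) (l : seq (edge n)) :
  \sum_(e : edge n) count_mem e l * F e = \sum_(e <- l) F e.
Proof.
elim: l => [|a l IH]; first by rewrite big_nil big1.
rewrite big_cons -IH /= (eq_bigr (fun e => (a == e) * F e + count_mem e l * F e)).
  rewrite big_split /=; congr (_ + _).
  by rewrite (bigD1 a) //= eqxx mul1n big1 ?addn0 // => f; rewrite eq_sym => /negbTE ->.
by move=> e _; rewrite mulnDl.
Qed.

Variable R : realFieldType.
Variable c : edge n -> R.

Lemma cost_ext (x y : edge n -> nat) : x =1 y -> cost c x = cost c y.
Proof. by move=> h; apply: eq_bigr => e _; rewrite h. Qed.

Lemma cost_msum (x y : edge n -> nat) : cost c (msum x y) = (cost c x + cost c y)%R.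
Proof. by rewrite /cost -big_split; apply: eq_bigr => e _; rewrite /msum natrD mulrDl. Qed.

Lemma cost_ind e : cost c (ind e) = c e.
Proof.
rewrite /cost (bigD1 e) //= big1 ?addr0 /ind ?eqxx ?mul1r //.
by move=> f; rewrite eq_sym => /negbTE ->; rewrite mul0r.
Qed.

Lemma sum_count_R (l : seq (edge n)) :
  cost c (fun e => count_mem e l) = (\sum_(e <- l) c e)%R.
Proof.
rewrite /cost; elim: l => [|a l IH]; first by rewrite big_nil big1 // => e _; rewrite mul0r.
rewrite big_cons -IH /= (eq_bigr (fun e => ((a == e)%:R * c e + (count_mem e l)%:R * c e))%R).
  rewrite big_split /=; congr (_ + _)%R.
  rewrite (bigD1 a) //= eqxx mul1r big1 ?addr0 // => f; rewrite eq_sym => /negbTE ->.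
  by rewrite mul0r.
by move=> e _; rewrite natrD mulrDl.
Qed.

End E.

Section S.
Variable T : Type.
Lemma zip_drop (S : Type) k (s : seq T) (t : seq S) : zip (drop k s) (drop k t) = drop k (zip s t).
Proof. elim: s t k => [|x s IH] [|y t] [|k] //=; by case: drop. Qed.
Lemma zip_take (S : Type) k (s : seq T) (t : seq S) : zip (take k s) (take k t) = take k (zip s t).
Proof. elim: s t k => [|x s IH] [|y t] [|k] //=; by rewrite IH. Qed.
Lemma zip_rot (S : Type) k (s : seq T) (t : seq S) : size s = size t ->
  zip (rot k s) (rot k t) = rot k (zip s t).
Proof. by move=> h; rewrite /rot zip_cat ?size_drop ?h // zip_drop zip_take. Qed.
Lemma mem_zip1 (S T' : eqType) (s : seq S) (t : seq T') q : q \in zip s t -> q.1 \in s /\ q.2 \in t.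
Proof.
elim: s t => [|x s IH] [|y t] //=; rewrite in_cons => /orP [/eqP -> | /IH [h1 h2]] /=.
  by rewrite !inE !eqxx.
by rewrite !inE h1 h2 !orbT.
Qed.
End S.

Section E2.
Variable n : nat.
Implicit Types (u v w a b : 'I_n) (e : edge n) (s p : seq 'I_n).

Definition pe x p : seq (edge n) := [seq mk_edge q.1 q.2 | q <- zip (belast x p) p].

Lemma tour_cons x p : tour_edges (x :: p) = rcons (pe x p) (mk_edge (last x p) x).
Proof.
rewrite /tour_edges rot1_cons {1}(lastI x p) zip_rcons ?size_belast //.
by rewrite map_rcons.
Qed.

Lemma tour_cons2 a y p : tour_edges (a :: y :: p) = mk_edge a y :: rcons (pe y p) (mk_edge (last y p) a).
Proof. by rewrite tour_cons. Qed.

Lemma tour_rot k s : perm_eq (tour_edges (rot k s)) (tour_edges s).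
Proof.
rewrite /tour_edges rot_rot zip_rot ?size_rot // map_rot.
by rewrite perm_rot.
Qed.

Lemma mem_tour e s : e \in tour_edges s -> (val e).1 \in s /\ (val e).2 \in s.
Proof.
move=> /mapP [q /mem_zip1 [h1 h2] ->]; rewrite mem_rot in h2.
by rewrite mk_edge_val; case: ifP.
Qed.

Lemma sum_zip_eq v (s t : seq 'I_n) : size s = size t ->
  \sum_(q <- zip s t) (((q.1 == v) : nat) + ((q.2 == v) : nat)) = count_mem v s + count_mem v t.
Proof.
elim: s t => [|x s IH] [|y t] //= h; rewrite ?big_nil // big_cons IH /=; last by case: h.
by lia.
Qed.

Lemma deg_tour s v : deg (fun e => count_mem e (tour_edges s)) v = 2 * count_mem v s.
Proof.
rewrite /deg (sum_count_nat (fun e => mv e v)) big_map.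
rewrite (eq_bigr (fun q : 'I_n * 'I_n => (((q.1 == v) : nat) + ((q.2 == v) : nat)))); last first.
  by move=> q _; rewrite mv_mk.
rewrite sum_zip_eq ?size_rot //.
have hp : perm_eq (rot 1 s) s by rewrite perm_rot.
by rewrite (permP hp); lia.
Qed.

Lemma connect_belast (r : rel 'I_n) x t :
  (forall q, q \in zip (belast x t) t -> r q.1 q.2) -> forall y, y \in x :: t -> connect r x y.
Proof.
elim: t x => [|z t IH] x h y; first by rewrite inE => /eqP ->.
rewrite in_cons => /orP [/eqP -> // | hy].
apply: (connect_trans (y := z)).
  by apply: connect1; apply: (h (x, z)); rewrite /= inE eqxx.
apply: IH => // q hq; apply: h; by rewrite /= inE hq orbT.
Qed.

Lemma connect_tour (r : rel 'I_n) s : symmetric r ->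
  (forall e, e \in tour_edges s -> r (val e).1 (val e).2) ->
  forall u v, u \in s -> v \in s -> connect r u v.
Proof.
case: s => [|x t] // hs h u v hu hv.
have hb : forall q, q \in zip (belast x t) t -> r q.1 q.2.
  move=> q hq.
  have : mk_edge q.1 q.2 \in tour_edges (x :: t).
    by rewrite tour_cons mem_rcons inE; apply/orP; right; apply/mapP; exists q.
  move/h; rewrite mk_edge_val; case: ifP => _ //=.
  by rewrite (hs q.2 q.1).
apply: (connect_trans (y := x)).
  by rewrite (sym_connect_sym hs u x); exact: (connect_belast hb hu).
exact: (connect_belast hb hv).
Qed.

End E2.

From mathcomp Require Import lra.

Section Red.
Variable n : nat.
Variable R : realFieldType.
Variable c : edge n -> R.
Hypothesis hc0 : forall e, (0 <= c e)%R.
Hypothesis htri : forall u v w : 'I_n, (c (mk_edge u v) <= c (mk_edge u w) + c (mk_edge w v))%R.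
Implicit Types (u v w a b : 'I_n) (e : edge n) (z : edge n -> nat).

Lemma exists_inc z v : 0 < deg z v -> exists e, 0 < z e /\ 0 < mv e v.
Proof.
case: (pickP (fun e => (0 < z e) && (0 < mv e v))) => [e /andP [h1 h2]|h].
  by exists e.
rewrite /deg big1 // => e _; move: (h e) => /negbT; rewrite negb_and -!leqNgt !leqn0.
case/orP => /eqP H; first by rewrite H.
by rewrite -/(mv e v) H muln0.
Qed.

Lemma other e v : 0 < mv e v -> exists u, e = mk_edge v u.
Proof.
move=> h; rewrite (mk_edge_eta e); move: h; rewrite /mv.
case: (val e) => a b /=.
case: (eqVneq a v) => [->|_]; first by exists b.
case: (eqVneq b v) => [->|//]; by exists a; rewrite mk_edgeC.
Qed.

Lemma mv_loop v x : mv (mk_edge v v) x = 2 * (v == x).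
Proof. by rewrite mv_mk; lia. Qed.

Lemma loopcase z v : 0 < z (mk_edge v v) ->
  exists z', deg z' v + 2 = deg z v /\ (forall x, x != v -> deg z' x = deg z x) /\
             (cost c z' <= cost c z)%R.
Proof.
move=> hz; set e := mk_edge v v.
exists (fun f => z f - ind e f).
have E : msum (fun f => z f - ind e f) (ind e) =1 z.
  by move=> f; rewrite /msum /ind /=; case: eqP => [<-|_] /=; rewrite /e; lia.
split; [|split].
- by have := deg_ext E v; rewrite deg_msum deg_ind mv_loop eqxx.
- move=> x hx; have := deg_ext E x; rewrite deg_msum deg_ind mv_loop.
  case: eqP => [vx|_]; last by lia.
  by move: hx; rewrite vx eqxx.
- have := cost_ext c E; rewrite cost_msum cost_ind => <-.
  by have := hc0 e; lra.
Qed.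

Lemma ind_arith z e1 e2 g f : 0 < z e2 - ind e1 e2 -> 0 < z e1 ->
  z f - ind e1 f - ind e2 f + g + ind e1 f + ind e2 f = z f + g.
Proof.
rewrite /ind; have : e1 = e1 by []. have : e2 = e2 by [].
by repeat (case: eqP => ?); subst; try congruence; lia.
Qed.

Lemma localop z v : 2 <= deg z v ->
  exists z', deg z' v + 2 = deg z v /\ (forall x, x != v -> deg z' x = deg z x) /\
             (cost c z' <= cost c z)%R.
Proof.
move=> hd.
have [e1 [h1 hm1]] := exists_inc (leq_trans (isT : 0 < 2) hd).
have [u eu] := other hm1.
case: (eqVneq u v) => [uv|unv].
  by apply: loopcase; rewrite -{2}uv -eu.
set z1 := fun f => z f - ind e1 f.
have E1 : msum z1 (ind e1) =1 z.
  by move=> f; rewrite /msum /z1 /ind /=; case: eqP => [<-|_] /=; lia.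
have hd1 : 0 < deg z1 v.
  have := deg_ext E1 v; rewrite deg_msum deg_ind eu mv_mk eqxx (negbTE unv) /=; lia.
have [e2 [h2 hm2]] := exists_inc hd1.
have [w ew] := other hm2.
have z2pos : 0 < z e2.
  by move: h2; rewrite /z1; lia.
case: (eqVneq w v) => [wv|wnv].
  by apply: loopcase; rewrite -{2}wv -ew.
set z' := fun f => z f - ind e1 f - ind e2 f + ind (mk_edge u w) f.
exists z'.
have E : msum (msum z' (ind e1)) (ind e2) =1 msum z (ind (mk_edge u w)).
  move=> f; rewrite /msum /z'; exact: ind_arith.
split; [|split].
- have := deg_ext E v; rewrite !deg_msum !deg_ind eu ew !mv_mk eqxx (negbTE unv) (negbTE wnv) /=.
  lia.
- move=> x hx; have hx' : (v == x) = false by rewrite eq_sym (negbTE hx).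
  have := deg_ext E x; rewrite !deg_msum !deg_ind eu ew !mv_mk hx' /=.
  lia.
- have := cost_ext c E; rewrite !cost_msum !cost_ind eu ew.
  have := htri u w v; rewrite (mk_edgeC u v); lra.
Qed.

Lemma reduction (l : seq 'I_n) : uniq l -> forall z, (forall v, v \in l -> 2 <= deg z v) ->
  exists z', (forall x, deg z' x + 2 * (x \in l) = deg z x) /\ (cost c z' <= cost c z)%R.
Proof.
elim: l => [|v l IH] /=.
  by move=> _ z _; exists z; split => // x; rewrite ?in_nil /= ?muln0 ?addn0.
move=> /andP [vl ul] z hz.
have [z1 [d1 [d2 c1]]] := localop (hz v (mem_head _ _)).
have [|z2 [e1 c2]] := IH ul z1.
  move=> x hx; rewrite d2; first by apply: hz; rewrite inE hx orbT.
  by apply: contraNneq vl => <-.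
exists z2; split; last by lra.
move=> x; rewrite in_cons; case: (eqVneq x v) => [->|hx] /=.
  by move: (e1 v) d1; rewrite (negbTE vl); lia.
by rewrite -d2 // -e1.
Qed.

End Red.

Section Euler.
Variable n : nat.
Implicit Types (u v w a b y : 'I_n) (e : edge n) (z : edge n -> nat).

Definition sz z := \sum_(e : edge n) z e.

Lemma sz_msum z1 z2 : sz (msum z1 z2) = sz z1 + sz z2.
Proof. by rewrite /sz -big_split. Qed.

Lemma sz_ind e : sz (ind e) = 1.
Proof.
rewrite /sz (bigD1 e) //= big1 ?addn0 /ind ?eqxx //.
by move=> f; rewrite eq_sym => /negbTE ->.
Qed.

Lemma sz_ext z1 z2 : z1 =1 z2 -> sz z1 = sz z2.
Proof. by move=> h; apply: eq_bigr => e _; rewrite h. Qed.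

Lemma le_sz z e : z e <= sz z.
Proof. by rewrite /sz (bigD1 e) //= leq_addr. Qed.

Lemma mv_le2 e v : mv e v <= 2.
Proof. by rewrite /mv; case: (_ == _); case: (_ == _). Qed.

Lemma par1 (x1 y1 k : nat) : x1 + k = y1 -> odd x1 = odd y1 (+) odd k.
Proof. by move=> <-; rewrite oddD; case: odd; case: odd. Qed.

Lemma excl (p q w : 'I_n) : p != q -> ~~ ((p == w) && (q == w)).
Proof. by apply: contra => /andP [/eqP -> /eqP ->]. Qed.

Lemma odd_inc z a : odd (deg z a) -> exists y, y != a /\ 0 < z (mk_edge a y).
Proof.
move=> ho.
case: (pickP (fun e => (0 < z e) && (mv e a == 1))) => [e /andP [h1 /eqP h2]|h].
  have [y ey] : exists y, e = mk_edge a y by apply: other; rewrite h2.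
  exists y; split; last by rewrite -ey.
  by move: h2; rewrite ey mv_mk eqxx; case: (y == a).
suff : ~~ odd (deg z a) by rewrite ho.
rewrite /deg.
apply: (big_ind (fun x => ~~ odd x)) => //.
  by move=> x1 x2 h1 h2; rewrite oddD (negbTE h1) (negbTE h2).
move=> e _; rewrite -/(mv e a) oddM negb_and.
have := mv_le2 e a; move: (h e) => /=; case: (mv e a) => [|[|[|k]]] //= h0 _; rewrite ?orbT ?orbF //.
by move: h0; rewrite eqxx andbT => /negbT; rewrite -leqNgt leqn0 => /eqP ->.
Qed.

Lemma pathlemma N : forall z a b, sz z <= N -> a != b ->
  (forall w, odd (deg z w) = (a == w) || (b == w)) ->
  exists p z'', [/\ last a p = b,
     (forall f, z f + ind (mk_edge b a) f = count_mem f (tour_edges (a :: p)) + z'' f)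
   & (forall w, ~~ odd (deg z'' w))].
Proof.
elim: N => [|N IH] z a b hN hab hodd.
  have := hodd a; rewrite eqxx /= => /odd_inc [y [_ hy]].
  by move: (leq_trans (le_sz z (mk_edge a y)) hN); rewrite leqn0 => /eqP h; rewrite h in hy.
have := hodd a; rewrite eqxx /= => /odd_inc [y [hya hy]].
set e := mk_edge a y.
set z' := fun f => z f - ind e f.
have E : msum z' (ind e) =1 z.
  by move=> f; rewrite /msum /z' /ind /=; case: eqP => [<-|_] /=; rewrite ?eqxx /= ?/e; lia.
have hsz : sz z' <= N by move: (sz_ext E); rewrite sz_msum sz_ind; lia.
have hdeg w : deg z' w + mv e w = deg z w by rewrite -(deg_ext E w) deg_msum deg_ind.
have hay : a != y by rewrite eq_sym.
case: (eqVneq y b) => [yb|ynb].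
  exists [:: b], z'; split => //.
    move=> f; have := E f; rewrite /msum /ind /e yb tour_cons2 /=; lia.
  move=> w; rewrite (par1 (hdeg w)) hodd /e mv_mk yb.
  by move: (excl w hab); case: (a == w); case: (b == w).
have [|p' [z'' [hl hc hev]]] := IH z' y b hsz ynb.
  move=> w; rewrite (par1 (hdeg w)) hodd /e mv_mk.
  move: (excl w hab) (excl w hay) (excl w ynb).
  by case: (a == w); case: (b == w); case: (y == w).
exists (y :: p'), z''; split => //.
move=> f; have := E f; have := hc f.
rewrite /msum /ind /e tour_cons2 tour_cons hl /= -!cats1 !count_cat /=; lia.
Qed.

Definition decomp z (ws : seq (seq 'I_n)) :=
  (forall f, z f = \sum_(s <- ws) count_mem f (tour_edges s)) /\ all (fun s => s != [::]) ws.

Lemma decomposition N : forall z, sz z <= N -> (forall w, ~~ odd (deg z w)) ->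
  exists ws, decomp z ws.
Proof.
elim: N => [|N IH] z hN hev.
  exists [::]; split => // f; rewrite big_nil.
  by apply/eqP; rewrite -leqn0; apply: leq_trans (le_sz z f) hN.
case: (pickP (fun e => 0 < z e)) => [e he|h]; last first.
  exists [::]; split => // f; rewrite big_nil.
  by move: (h f) => /negbT; rewrite -leqNgt leqn0 => /eqP.
set z' := fun f => z f - ind e f.
have E : msum z' (ind e) =1 z.
  by move=> f; rewrite /msum /z' /ind /=; case: eqP => [<-|_] /=; rewrite ?eqxx /= ?/e; lia.
have hsz : sz z' <= N by move: (sz_ext E); rewrite sz_msum sz_ind; lia.
have hdeg w : deg z' w + mv e w = deg z w by rewrite -(deg_ext E w) deg_msum deg_ind.
rewrite (mk_edge_eta e) in hdeg E.
move: hdeg E; case: (val e) => a b /= hdeg E.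
case: (eqVneq a b) => [ab|nab].
  have [|ws [hws hne]] := IH z' hsz.
    move=> w; rewrite (par1 (hdeg w)) (negbTE (hev w)) ab mv_mk.
    by case: (b == w).
  exists ([:: b] :: ws); split => //= f.
  by rewrite big_cons -hws -(E f) /msum /ind ab /tour_edges /=; lia.
have [||p [z'' [hl hc hev'']]] := @pathlemma N z' b a hsz; first by rewrite eq_sym.
  move=> w; rewrite (par1 (hdeg w)) (negbTE (hev w)) mv_mk.
  by move: (excl w nab); case: (a == w); case: (b == w).
have hsz'' : sz z'' <= N.
  have h1 : sz (msum z' (ind (mk_edge a b))) =
            sz (msum (fun f => count_mem f (tour_edges (b :: p))) z'') := sz_ext hc.
  rewrite !sz_msum sz_ind in h1.
  have : 0 < sz (fun f => count_mem f (tour_edges (b :: p))).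
    rewrite tour_cons; apply: leq_trans (le_sz _ (mk_edge (last b p) b)).
    by rewrite -cats1 count_cat /= eqxx addn0 addn1.
  lia.
have [ws [hws hne]] := IH z'' hsz'' hev''.
exists ((b :: p) :: ws); split => //= f.
rewrite big_cons -hws; have := hc f; have := E f; rewrite /msum /ind /=; lia.
Qed.

End Euler.

Lemma count_pos (T : eqType) (x : T) s : (0 < count_mem x s) = (x \in s).
Proof. by rewrite -has_count has_pred1. Qed.

Section Merge.
Variable n : nat.
Implicit Types (u v w a b y : 'I_n) (e : edge n) (z : edge n -> nat).

Lemma tour_cat x (a b : seq 'I_n) :
  tour_edges (x :: a ++ x :: b) = tour_edges (x :: a) ++ tour_edges (x :: b).
Proof.
have e1 : rot 1 (x :: a ++ x :: b) = rcons a x ++ rcons b x.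
  by rewrite rot1_cons rcons_cat cat_rcons.
have e2 : x :: a ++ x :: b = (x :: a) ++ (x :: b) by [].
rewrite /tour_edges e1 e2 zip_cat ?size_rcons // map_cat.
by rewrite !rot1_cons.
Qed.

Lemma count_tour_rot k (s : seq 'I_n) f :
  count_mem f (tour_edges (rot k s)) = count_mem f (tour_edges s).
Proof. by apply/permP; apply: tour_rot. Qed.

Lemma merge2 (w1 w : seq 'I_n) x : x \in w1 -> x \in w ->
  exists m : seq 'I_n, m != [::] /\
    forall f, count_mem f (tour_edges m) = count_mem f (tour_edges w1) + count_mem f (tour_edges w).
Proof.
move=> h1 h2.
have r1 := rot_index h1; have r2 := rot_index h2.
set A := drop _ w1 ++ _ in r1; set B := drop _ w ++ _ in r2.
exists (x :: A ++ x :: B); split => // f.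
by rewrite tour_cat count_cat -r1 -r2 !count_tour_rot.
Qed.

Lemma cross (r : rel 'I_n) (S : pred 'I_n) u p : S u -> path r u p -> ~~ S (last u p) ->
  exists x y, [/\ S x, ~~ S y & r x y].
Proof.
elim: p u => [|y p IH] u hu /=; first by rewrite hu.
move=> /andP [hr hp] hl.
case hy: (S y); first by apply: (IH y).
by exists u, y; rewrite hy.
Qed.

Lemma sum_pos (ws : seq (seq 'I_n)) (F : seq 'I_n -> nat) :
  0 < \sum_(s <- ws) F s -> exists s, s \in ws /\ 0 < F s.
Proof.
elim: ws => [|s ws IH]; first by rewrite big_nil.
rewrite big_cons; case hs: (0 < F s).
  by move=> _; exists s; rewrite mem_head.
move=> h; have [|t [ht1 ht2]] := IH; first by move: hs h; lia.
by exists t; rewrite in_cons ht1 orbT.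
Qed.

Lemma mk_edge_mem x y (s : seq 'I_n) : mk_edge x y \in tour_edges s -> x \in s /\ y \in s.
Proof.
move/mem_tour; rewrite mk_edge_val; by case: ifP => _ /= [h1 h2].
Qed.

Lemma merge z : connected_supp z -> forall k ws, size ws <= k -> decomp z ws ->
  exists s : seq 'I_n, forall f, z f = count_mem f (tour_edges s).
Proof.
move=> hcon; elim => [|k IH] ws hk [hws hne].
  move: hk; rewrite leqn0 => /nilP ws0; exists [::] => f.
  by rewrite hws ws0 big_nil.
case: ws hk hws hne => [|w1 [|w2 rest]] hk hws hne.
- by exists [::] => f; rewrite hws big_nil.
- by exists w1 => f; rewrite hws big_seq1.
move: hne => /= /and3P [ne1 ne2 nerest].
case: w1 ne1 hws hk => [//|u w1'] _ hws hk; set w1 := u :: w1' in hws hk *.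
case: w2 ne2 hws hk => [//|v w2'] ne2 hws hk; set w2 := v :: w2' in hws hk ne2 *.
have [x [w [hxw1 hw hxw]]] : exists x (w : seq 'I_n), [/\ x \in w1, w \in w2 :: rest & x \in w].
  case hv: (v \in w1).
    by exists v, w2; rewrite mem_head hv mem_head.
  have /connectP [p hp hl] := hcon u v.
  have [|||x [y [hx hy hxy]]] := @cross (supp_adj z) (mem w1) u p.
  - by rewrite /= mem_head.
  - by [].
  - by rewrite /= -hl hv.
  move: hxy; rewrite /supp_adj hws => /sum_pos [t [ht1 ht2]].
  rewrite count_pos in ht2; have [hxt hyt] := mk_edge_mem ht2.
  exists x, t; split => //.
  move: ht1; rewrite in_cons => /orP [/eqP et|//].
  by move: hy; rewrite /= -et hyt.
have [m [mne hm]] := merge2 hxw1 hxw.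
have hperm := perm_to_rem hw.
set rest' := rem w (w2 :: rest) in hperm.
apply: (IH (m :: rest')).
- have := perm_size hperm; move: hk => /=; lia.
- split.
    move=> f; rewrite hws big_cons (perm_big _ hperm) !big_cons hm /=; lia.
  have := perm_all (fun s : seq 'I_n => s != [::]) hperm.
  by rewrite /= nerest mne => /esym /andP [_ ->].
Qed.

End Merge.

Section Shortcut.
Variable n : nat.
Variable R : realFieldType.
Variable c : edge n -> R.
Hypothesis htri : forall u v w : 'I_n, (c (mk_edge u v) <= c (mk_edge u w) + c (mk_edge w v))%R.

Definition cc (s : seq 'I_n) : R := (\sum_(e <- tour_edges s) c e)%R.

Lemma cc_rot k s : cc (rot k s) = cc s.
Proof. by rewrite /cc (perm_big _ (tour_rot k s)). Qed.

Lemma cc_step x t : x \in t -> (cc t <= cc (x :: t))%R.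
Proof.
case: t => [//|t1 t'] _.
rewrite /cc tour_cons tour_cons /pe /= -!cats1 !big_cat !big_seq1 big_cons /=.
rewrite !big_cat !big_seq1 /=.
have := htri (last t1 t') t1 x; lra.
Qed.

Lemma notuniq (s : seq 'I_n) : ~~ uniq s -> exists x, 1 < count_mem x s.
Proof.
elim: s => [//|y s IH] /=; rewrite negb_and negbK.
case hy: (y \in s) => /=.
  by move=> _; exists y; rewrite /= eqxx add1n ltnS count_pos.
by move=> /IH [x hx]; exists x; exact: leq_trans hx (leq_addl _ _).
Qed.

Lemma shortcut N : forall s : seq 'I_n, size s <= N -> (forall v, v \in s) ->
  exists s', [/\ uniq s', (forall v, v \in s') & (cc s' <= cc s)%R].
Proof.
elim: N => [|N IH] s hs hcov; case hu: (uniq s); try by exists s.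
  by move: hs hu; rewrite leqn0 => /nilP ->.
have [x hx] := notuniq (negbT hu).
have hxs : x \in s by rewrite -count_pos; lia.
have r := rot_index hxs; set t := drop _ s ++ _ in r.
have hct : count_mem x (x :: t) = count_mem x s.
  by rewrite -r; apply/permP; rewrite perm_rot.
have hxt : x \in t by rewrite -count_pos; move: hct hx => /=; rewrite eqxx; lia.
have [||s' [h1 h2 h3]] := IH t.
  by move: (size_rot (index x s) s) hs; rewrite r /=; lia.
  by move=> v; move: (hcov v); rewrite -(mem_rot (index x s)) r in_cons => /orP [/eqP ->|].
exists s'; split => //.
apply: (le_trans h3); rewrite -(cc_rot (index x s) s) r; exact: cc_step.
Qed.

End Shortcut.

Lemma count_enum n (s : seq 'I_n) v : perm_eq s (enum 'I_n) -> count_mem v s = 1.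
Proof.
move=> hs; rewrite (permP hs) count_uniq_mem ?enum_uniq //.
by rewrite mem_enum.
Qed.

Lemma mem_perm_enum n (s : seq 'I_n) v : perm_eq s (enum 'I_n) -> v \in s.
Proof. by move=> hs; rewrite (perm_mem hs) mem_enum. Qed.

Theorem theorem5 (R : realFieldType) (n : nat) (c : edge n -> R)
  (r : 'I_n -> nat) (alpha : R) (T1 P : edge n -> nat) :
  metric_cost c ->
  (forall v, 0 < r v)%N ->
  (1 <= alpha)%R ->
  ham_cycle T1 ->
  (forall H, ham_cycle H -> cost c T1 <= alpha * cost c H)%R ->
  transp_feasible (fun v => r v - 1)%N P ->
  (forall Q, transp_feasible (fun v => r v - 1)%N Q -> cost c P <= cost c Q)%R ->
  mvtsp_feasible r (msum T1 P) /\
  (forall z, mvtsp_feasible r z -> cost c (msum T1 P) <= (alpha + 1) * cost c z)%R.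
Proof.
move=> [hc0 htri] hr ha [s [hs hT1]] hopt1 hP hoptP.
have degT1 v : deg T1 v = 2.
  by rewrite (deg_ext hT1) deg_tour count_enum.
split.
  split.
    by move=> v; rewrite deg_msum degT1 hP; have := hr v; lia.
  move=> u v; apply: (@connect_tour n _ s).
  - by move=> x y; rewrite /supp_adj mk_edgeC.
  - move=> e he; rewrite /supp_adj -mk_edge_eta /msum hT1.
    by apply: leq_trans (leq_addr _ _); rewrite count_pos.
  - exact: mem_perm_enum.
  - exact: mem_perm_enum.
move=> z [hz hcon].
have [Q [hQ cQ]] : exists Q, (forall x, deg Q x + 2 * (x \in enum 'I_n) = deg z x) /\
    (cost c Q <= cost c z)%R.
  apply: (reduction hc0 htri (enum_uniq 'I_n)) => v _.
  by rewrite hz; have := hr v; lia.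
have hPz : (cost c P <= cost c z)%R.
  apply: le_trans (hoptP Q _) cQ => v.
  by move: (hQ v); rewrite hz mem_enum /=; lia.
have hev : forall w, ~~ odd (deg z w) by move=> w; rewrite hz oddM.
have [ws hws] := decomposition (leqnn (sz z)) hev.
have [s0 hs0] := merge hcon (leqnn (size ws)) hws.
have hcov : forall v, v \in s0.
  move=> v; have [|e [he hm]] := exists_inc (z := z) (v := v).
    by rewrite hz; have := hr v; lia.
  rewrite hs0 count_pos in he; have [h1 h2] := mem_tour he.
  by move: hm; rewrite /mv; case: eqP => [<-//|_]; case: eqP => [<-//|_].
have [s' [u1 u2 u3]] := shortcut htri (leqnn (size s0)) hcov.
have hH : ham_cycle (fun e => count_mem e (tour_edges s')).
  exists s'; split => //; apply: uniq_perm => //; first exact: enum_uniq.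
  by move=> v; rewrite mem_enum u2.
have hT := hopt1 _ hH.
have ecz : cost c z = cc c s0 by rewrite (cost_ext c hs0) sum_count_R.
have ecH : cost c (fun e => count_mem e (tour_edges s')) = cc c s' by rewrite sum_count_R.
have hTz : (cost c T1 <= alpha * cost c z)%R.
  apply: le_trans hT _; rewrite ecH ecz; apply: ler_wpM2l => //.
  by apply: le_trans ha.
rewrite cost_msum mulrDl mul1r; lra.
Qed.
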